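(* On every MAPF-DL instance, and for every choice of tie-breaking, of collisions selected for branching, and of paths returned by the low-level search, CBS-DL generates only finitely many constraint-tree nodes.
   Context: MAPF-DL. An instance consists of a deadline $T_{\mathrm{end}}\in\mathbb{N}$, a finite undirected graph $G=(V,E)$, and $M$ agents $a_1,\dots,a_M$; agent $a_i$ has a start vertex $s_i$ and a goal vertex $g_i$, and the graph distance from $s_i$ to $g_i$ is at most $T_{\mathrm{end}}$. A path for $a_i$ is a map $l_i:\{0,\dots,T_{\mathrm{end}}\}\to V$ with $l_i(0)=s_i$, $l_i(T_{\mathrm{end}})=g_i$, and for each $t\ge1$ either $(l_i(t-1),l_i(t))\in E$ or $l_i(t-1)=l_i(t)$. A plan assigns a path to each agent of some subset (the successful agents); the others are unsuccessful and get no path. Two distinct successful agents $a_i,a_j$ have a vertex collision $(a_i,a_j,v,t)$ if $l_i(t)=l_j(t)=v$, and an edge collision $(a_i,a_j,u,v,t)$ if $u=l_i(t)=l_j(t+1)$ and $v=l_j(t)=l_i(t+1)$. A solution is a plan with no collisions; its cost is the number of unsuccessful agents. Constraints: a vertex constraint $(a_i,v,t)$ forbids $l_i(t)=v$; an edge constraint $(a_i,u,v,t)$ forbids $l_i(t)=u$ together with $l_i(t+1)=v$. A path for $a_i$ obeys a constraint set $C$ if it violates none of the constraints in $C$ concerning $a_i$. Algorithm CBS-DL. Low-level search: given agent $a_i$ and constraint set $C$, it returns some path for $a_i$ obeying $C$ if one exists, and otherwise returns ''no path''. The high level performs best-first search over a constraint tree (CT); each CT node $N$ has a constraint set $N.C$,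 a plan $N.\mathrm{plan}$, and cost $N.\mathrm{cost}$ = number of agents without a path in $N.\mathrm{plan}$. The root has $C=\emptyset$ and the plan containing a low-level path for every agent (cost $0$). OPEN initially contains the root. Repeat: remove from OPEN a node $N$ of minimum cost (ties arbitrary). If $N.\mathrm{plan}$ has no collision, return it. Otherwise pick some collision in $N.\mathrm{plan}$. For a vertex collision $(a_i,a_j,v,t)$ create two children: one with constraints $N.C\cup\{(a_i,v,t)\}$ and one with $N.C\cup\{(a_j,v,t)\}$; for an edge collision $(a_i,a_j,u,v,t)$ the children get $N.C\cup\{(a_i,u,v,t)\}$ and $N.C\cup\{(a_j,v,u,t)\}$, respectively. Each child copies $N.\mathrm{plan}$, and then the path of the agent named in its new constraint is replaced by the low-level search result for that agent under the child's constraint set (the agent's path is deleted if ''no path'' is returned); the child's cost is recomputed and the child is inserted into OPEN. *)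

(* Defs.v *)
From mathcomp Require Import all_boot.
From Stdlib Require List.
Set Implicit Arguments. Unset Strict Implicit. Unset Printing Implicit Defensive.

Section CBSDL.
Variables (V : finType) (e : rel V) (M Tend : nat) (s g : 'I_M -> V).

Definition dist_le (x y : V) (n : nat) : Prop :=
  exists p : seq V, [/\ path e x p, last x p = y & size p <= n].

(* a path for agent i: a location function on times 0..Tend (values beyond Tend irrelevant) *)
Definition is_path (i : 'I_M) (l : nat -> V) : Prop :=
  [/\ l 0 = s i, l Tend = g i &
      forall t, 1 <= t <= Tend -> e (l t.-1) (l t) || (l t.-1 == l t)].

Inductive constr : Type :=
  | VC (i : 'I_M) (v : V) (t : nat)
  | EC (i : 'I_M) (u v : V) (t : nat).

Definition respects (i : 'I_M) (l : nat -> V) (c : constr) : Prop :=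
  match c with
  | VC j v t => j = i -> l t <> v
  | EC j u v t => j = i -> ~ (l t = u /\ l t.+1 = v)
  end.

Definition obeys (i : 'I_M) (l : nat -> V) (C : seq constr) : Prop :=
  forall c, List.In c C -> respects i l c.

Definition lowlevel (i : 'I_M) (C : seq constr) (r : option (nat -> V)) : Prop :=
  match r with
  | Some l => is_path i l /\ obeys i l C
  | None => ~ exists l, is_path i l /\ obeys i l C
  end.

Definition plan := 'I_M -> option (nat -> V).

Inductive collision : Type :=
  | VColl (i j : 'I_M) (v : V) (t : nat)
  | EColl (i j : 'I_M) (u v : V) (t : nat).

Definition is_collision (P : plan) (c : collision) : Prop :=
  match c with
  | VColl i j v t => i <> j /\ t <= Tend /\
      exists li lj, [/\ P i = Some li, P j = Some lj, li t = v & lj t = v]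
  | EColl i j u v t => i <> j /\ t < Tend /\
      exists li lj, [/\ P i = Some li, P j = Some lj,
                       u = li t /\ u = lj t.+1 & v = lj t /\ v = li t.+1]
  end.

Record node := Node { nC : seq constr; nplan : plan }.

Definition cost (N : node) : nat := #|[pred i | ~~ isSome (nplan N i)]|.

Definition branch (c : collision) : (constr * 'I_M) * (constr * 'I_M) :=
  match c with
  | VColl i j v t => ((VC i v t, i), (VC j v t, j))
  | EColl i j u v t => ((EC i u v t, i), (EC j v u t, j))
  end.

Definition child (N : node) (ca : constr * 'I_M) (Ch : node) : Prop :=
  exists r, [/\ lowlevel ca.2 (ca.1 :: nC N) r,
                nC Ch = ca.1 :: nC N &
                forall k, nplan Ch k = if k == ca.2 then r else nplan N k].

Definition is_root (N : node) : Prop :=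
  nC N = nil /\ forall i, lowlevel i nil (nplan N i).

Record state := State { OPEN : seq node; generated : nat; returned : bool }.

Definition halted (S : state) : Prop := returned S = true \/ OPEN S = nil.

(* one iteration of the high-level loop; the chosen node N is a min-cost node
   of OPEN (arbitrary tie-breaking), the collision is arbitrary *)
Definition step (S S' : state) : Prop :=
  returned S = false /\
  exists O1 O2 N, OPEN S = O1 ++ N :: O2 /\
    (forall N', List.In N' (OPEN S) -> cost N <= cost N') /\
    ( ((forall c, ~ is_collision (nplan N) c) /\
        S' = State (O1 ++ O2) (generated S) true)
    \/ (exists c Ch1 Ch2, is_collision (nplan N) c /\
          child N (branch c).1 Ch1 /\ child N (branch c).2 Ch2 /\
          S' = State (O1 ++ O2 ++ [:: Ch1; Ch2]) (generated S).+2 false)).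

(* a (possibly stuttering after halting) execution of CBS-DL *)
Definition execution (r : nat -> state) : Prop :=
  (exists root, is_root root /\ r 0 = State [:: root] 1 false) /\
  forall k, step (r k) (r k.+1) \/ (halted (r k) /\ r k.+1 = r k).

End CBSDL.

(* Main.v *)
Require Import Defs.
From mathcomp Require Import all_boot.
From Stdlib Require List.
From Stdlib Require Import Lia.
From mathcomp Require Import zify.
Set Implicit Arguments. Unset Strict Implicit. Unset Printing Implicit Defensive.

Section Aux.
Variables (V : finType) (e : rel V) (M Tend : nat) (s g : 'I_M -> V).

Definition F : finType := (('I_M * V * 'I_Tend.+1) + ('I_M * V * V * 'I_Tend.+1))%type.

Definition enc (c : constr V M) : option F :=
  match c with
  | VC i v t => if t <= Tend then Some (inl (i, v, inord t)) else None
  | EC i u v t => if t <= Tend then Some (inr (i, u, v, inord t)) else None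
  end.

Definition dec (x : F) : constr V M :=
  match x with
  | inl (i, v, t) => VC i v t
  | inr (i, u, v, t) => EC i u v t
  end.

Lemma encK c x : enc c = Some x -> dec x = c.
Proof.
case: c => [i v t|i u v t] /=; case: ifP => // Ht [<-] /=; by rewrite inordK.
Qed.

Definition Inv (N : node V M) : Prop :=
  uniq (map enc (nC N)) /\
  forall k l, nplan N k = Some l -> obeys k l (nC N).

Definition D := #|{: option F}|.

Lemma Inv_size N : Inv N -> size (nC N) <= D.
Proof.
case=> U _; rewrite -(size_map enc); move/card_uniqP: U => <-.
exact: max_card.
Qed.

Definition f (d : nat) := 2 ^ (D.+2 - d) - 2.

Lemma f_step d : d <= D -> 2 * f d.+1 + 2 <= f d.
Proof.
move=> Hd; rewrite /f subSS.
have -> : D.+2 - d = (D.+1 - d).+1 by rewrite subSn // ltnW.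
rewrite expnS.
have : 2 <= 2 ^ (D.+1 - d).
  have : 1 <= D.+1 - d by rewrite subn_gt0.
  case: (D.+1 - d) => // n _; rewrite expnS; have := expn_gt0 2 n; lia.
lia.
Qed.

Definition Phi (O : seq (node V M)) := sumn (map (fun N => f (size (nC N))) O).

Lemma child_Inv N c a Ch :
  Inv N -> enc c <> None -> (forall l, nplan N a = Some l -> ~ respects a l c) ->
  (exists l, nplan N a = Some l) ->
  (forall k l, k <> a -> respects k l c) ->
  child e Tend s g N (c, a) Ch -> Inv Ch.
Proof.
move=> [U Ob] Hc Hviol [la Hla] Hoth [rr [Hll HC Hp]] /=.
have Hnot : ~ List.In c (nC N).
  by move=> Hin; apply: (Hviol la Hla); apply: (Ob a la Hla).
split.
  rewrite HC /= U andbT.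
  have Hne : forall c', List.In c' (nC N) -> enc c' <> enc c.
    move=> c' Hin Heq; case E: (enc c) Heq Hc => [x|] // Heq _.
    apply: Hnot; have := encK Heq; have := encK E => <- ->.
    by [].
  move: Hne; clear; elim: (nC N) => //= y ys IH Hne.
  rewrite in_cons negb_or; apply/andP; split.
    by apply/eqP => Heq; apply: (Hne y (or_introl erefl)).
  by apply: IH => c' H; apply: Hne; right.
move=> k l; rewrite Hp HC; case: eqP => [-> | Hk].
  by move: Hll => /=; case: rr {Hp} => // l' [_ Hob] [<-].
move=> Hl c' /= [<- | Hin]; first by apply: Hoth.
exact: Ob Hl _ Hin.
Qed.

Lemma child_size N ca Ch : child e Tend s g N ca Ch -> size (nC Ch) = (size (nC N)).+1.
Proof. by case=> rr [_ -> _]. Qed.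

Lemma branch_Inv N c Ch1 Ch2 : Inv N -> is_collision Tend (nplan N) c ->
  child e Tend s g N (branch c).1 Ch1 -> child e Tend s g N (branch c).2 Ch2 ->
  Inv Ch1 /\ Inv Ch2.
Proof.
move=> HN; case: c => [i j v t | i j u v t] /=.
  move=> [Hij [Ht [li [lj [Hi Hj Hli Hlj]]]]] C1 C2; split.
    apply: (child_Inv (c:=VC i v t) (a:=i)) C1 => //=; first by rewrite Ht.
    - by move=> l; rewrite Hi => -[<-] H; exact: H erefl Hli.
    - by exists li.
    - by move=> k l Hk E; case: Hk.
  apply: (child_Inv (c:=VC j v t) (a:=j)) C2 => //=; first by rewrite Ht.
  - by move=> l; rewrite Hj => -[<-] H; exact: H erefl Hlj.
  - by exists lj.
  - by move=> k l Hk E; case: Hk.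
move=> [Hij [Ht [li [lj [Hi Hj [Hu1 Hu2] [Hv1 Hv2]]]]]] C1 C2; split.
  apply: (child_Inv (c:=EC i u v t) (a:=i)) C1 => //=; first by rewrite ltnW.
  - by move=> l; rewrite Hi => -[<-] H; exact: H erefl (conj (esym Hu1) (esym Hv2)).
  - by exists li.
  - by move=> k l Hk E; case: Hk.
apply: (child_Inv (c:=EC j v u t) (a:=j)) C2 => //=; first by rewrite ltnW.
- by move=> l; rewrite Hj => -[<-] H; exact: H erefl (conj (esym Hv1) (esym Hu2)).
- by exists lj.
- by move=> k l Hk E; case: Hk.
Qed.

Lemma Phi_cat O1 O2 : Phi (O1 ++ O2) = Phi O1 + Phi O2.
Proof. by rewrite /Phi map_cat sumn_cat. Qed.
Lemma In_cat (T : Type) (x : T) (s1 s2 : seq T) :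
  List.In x (s1 ++ s2) <-> List.In x s1 \/ List.In x s2.
Proof.
elim: s1 => [|y ys IH] /=; first by split; [right | case].
rewrite IH; tauto.
Qed.
End Aux.

Theorem lemma1 (V : finType) (e : rel V) (M Tend : nat) (s g : 'I_M -> V)
  (Hsym : symmetric e) (Hirr : irreflexive e)
  (Hdist : forall i : 'I_M, dist_le e (s i) (g i) Tend)
  (r : nat -> state V M)
  (Hr : execution e Tend s g r) :
  exists B : nat, forall k : nat, generated (r k) <= B.
Proof.
case: Hr => [[root [[Hnil _] H0]] Hstep].
suff H : forall k, (forall N, List.In N (OPEN (r k)) -> Inv Tend N) /\
    generated (r k) + Phi Tend (OPEN (r k)) <= 1 + f V M Tend 0.
  exists (1 + f V M Tend 0) => k; case: (H k) => _ Hk; lia.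
elim=> [|k [IHinv IHphi]].
  rewrite H0 /=; split; last by rewrite /Phi /= Hnil addn0.
  move=> N [<- | []] //; split; first by rewrite Hnil.
  by move=> k l _; rewrite Hnil => c [].
case: (Hstep k) => [[_ [O1 [O2 [N [HO [_ Hcase]]]]]] | [_ ->]]; last by split.
have HinN : List.In N (OPEN (r k)) by rewrite HO; apply: (proj2 (In_cat _ _ _)); right; left.
have HN := IHinv N HinN.
have Hsz := Inv_size HN.
have Hin12 : forall N', List.In N' (O1 ++ O2) -> Inv Tend N'.
  move=> N' H0'; apply: IHinv; rewrite HO; apply: (proj2 (In_cat _ _ _)).
  case: (proj1 (In_cat _ _ _) H0') => H; [by left | by right; right].
have Hcons : forall (N0 : node V M) (O : seq (node V M)), Phi Tend (N0 :: O) = f V M Tend (size (nC N0)) + Phi Tend O.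
  by move=> N0 O.
move: IHphi; rewrite HO Phi_cat Hcons => IHphi.
case: Hcase => [[_ ->] | [c [Ch1 [Ch2 [Hc [C1 [C2 ->]]]]]]] /=.
  by split => //; rewrite Phi_cat; lia.
have [I1 I2] := branch_Inv HN Hc C1 C2.
split.
  move=> N' H0'; case: (proj1 (In_cat _ _ _) H0') => H; first by apply: Hin12; apply: (proj2 (In_cat _ _ _)); left.
  case: (proj1 (In_cat _ _ _) H) => {}H; first by apply: Hin12; apply: (proj2 (In_cat _ _ _)); right.
  by case: H => [<- | [<- | []]].
rewrite !Phi_cat !Hcons (child_size C1) (child_size C2) /Phi /= addn0 -/(Phi Tend O1) -/(Phi Tend O2).
have := f_step Hsz; lia.
Qed.
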